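(* Let $b\ge 3$ be an integer, $n=2^{b-2}$, $W^f\in\mathbb{R}^N$ with components of pairwise distinct absolute values, and $\mu>0$. Define $\tilde Q\in\mathbb{R}^N$ componentwise by $$\tilde Q_i=\begin{cases}0 & \text{if } |W^f_i|<\tfrac{2^{2-n}}{3}\mu,\\ \mathrm{sign}(W^f_i)\,2^{1-n} & \text{if } \tfrac{2^{2-n}}{3}\mu\le |W^f_i|<2^{2-n}\mu,\\ \mathrm{sign}(W^f_i)\,2^{-t} & \text{if } 2^{-t}\mu\le |W^f_i|<2^{-t+1}\mu,\quad t=1,\dots,n-2,\\ \mathrm{sign}(W^f_i) & \text{if } \mu\le |W^f_i|,\end{cases}$$ and assume $\tilde Q\neq 0$. For $t=0,\dots,n-1$ let $\tilde k_t$ be the number of indices $i$ with $|\tilde Q_i|=2^{-t}$. Then $$\tilde s^*=\left\lfloor \log_2\frac{4\sum_{t=0}^{n-1}2^{-t}\|W^f_{[\tilde k_t]}\|_1}{3\sum_{t=0}^{n-1}\tilde k_t\,2^{-2t}}\right\rfloor$$ minimizes $\|2^s\tilde Q-W^f\|_2^2$ over all $s\in\mathbb{Z}$.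
   Context: Notation: sort the indices of $W^f$ by decreasing $|W^f_i|$. Given nonnegative integers $k_0,\dots,k_{n-1}$ with $\sum_t k_t\le N$, the vector $W^f_{[k_0]}\in\mathbb{R}^N$ keeps the $k_0$ components of $W^f$ of largest magnitude and sets all other components to zero; $W^f_{[k_1]}$ keeps the next $k_1$ largest-magnitude components (those ranked $k_0+1,\dots,k_0+k_1$) and zeros out all others; in general $W^f_{[k_t]}$ keeps the components ranked $k_0+\dots+k_{t-1}+1,\dots,k_0+\dots+k_t$ in magnitude and zeros out the rest. $\mathrm{sign}$ is applied componentwise with $\mathrm{sign}(0)=0$. $\lfloor\cdot\rfloor$ is the floor function and $\|\cdot\|_1$ the $\ell^1$ norm. *)

(* Defs.v *)
From Stdlib Require Import Reals Lra Lia ZArith Arith List.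
Import ListNotations.
Open Scope R_scope.

Definition sgn (x : R) : R :=
  if Rlt_dec 0 x then 1 else if Rlt_dec x 0 then -1 else 0.

Definition sumR (f : nat -> R) (m : nat) : R :=
  fold_right Rplus 0 (map f (seq 0 m)).

Definition countN (P : nat -> bool) (m : nat) : nat :=
  length (filter P (seq 0 m)).

Fixpoint first_band (mu a : R) (ts : list nat) : option nat :=
  match ts with
  | nil => None
  | t :: ts' =>
      if Rle_dec (/ 2 ^ t * mu) a then
        if Rlt_dec a (/ 2 ^ (t - 1) * mu) then Some t else first_band mu a ts'
      else first_band mu a ts'
  end.

Definition Qtil (n : nat) (mu w : R) : R :=
  let a := Rabs w in
  if Rlt_dec a (/ 2 ^ (n - 2) / 3 * mu) then 0
  else if Rlt_dec a (/ 2 ^ (n - 2) * mu) then sgn w * / 2 ^ (n - 1)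
  else if Rle_dec mu a then sgn w
  else match first_band mu a (seq 1 (n - 2)) with
       | Some t => sgn w * / 2 ^ t
       | None => 0
       end.

Definition ktil (N n : nat) (mu : R) (W : nat -> R) (t : nat) : nat :=
  countN (fun i => if Req_EM_T (Rabs (Qtil n mu (W i))) (/ 2 ^ t) then true else false) N.

(* 0-based rank of index i in decreasing order of |W_i| *)
Definition rank (N : nat) (W : nat -> R) (i : nat) : nat :=
  countN (fun j => if Rlt_dec (Rabs (W i)) (Rabs (W j)) then true else false) N.

Fixpoint prefix (k : nat -> nat) (t : nat) : nat :=
  match t with O => O | S t' => (prefix k t' + k t')%nat end.

(* || W_{[k_t]} ||_1 : l1 norm of components ranked prefix t + 1 .. prefix (t+1) *)
Definition block_l1 (N : nat) (W : nat -> R) (k : nat -> nat) (t : nat) : R :=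
  sumR (fun i =>
          if andb (Nat.leb (prefix k t) (rank N W i)) (Nat.ltb (rank N W i) (prefix k (S t)))
          then Rabs (W i) else 0) N.

Definition log2R (x : R) : R := ln x / ln 2.

(* floor via Stdlib's Int_part (= up x - 1) *)
Definition sstar (N n : nat) (mu : R) (W : nat -> R) : Z :=
  let k := ktil N n mu W in
  Int_part (log2R ((4 * sumR (fun t => / 2 ^ t * block_l1 N W k t) n)
                   / (3 * sumR (fun t => INR (k t) * / 2 ^ (2 * t)) n))).

Definition err (N n : nat) (mu : R) (W : nat -> R) (s : Z) : R :=
  sumR (fun i => (powerRZ 2 s * Qtil n mu (W i) - W i) ^ 2) N.

(* Main.v *)
Require Import Defs.
From Stdlib Require Import Bool Reals ZArith Arith List Lra Lia.
Open Scope R_scope.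

Lemma sumR_S f m : sumR f (S m) = sumR f m + f m.
Proof. unfold sumR. rewrite seq_S, map_app, fold_right_app. simpl.
  generalize (map f (seq 0 m)). intros l. induction l; simpl; [ring| rewrite IHl; ring]. Qed.

Lemma sumR_ext f g m : (forall i, (i < m)%nat -> f i = g i) -> sumR f m = sumR g m.
Proof. induction m; intros H; [reflexivity|]. rewrite !sumR_S, IHm, H; auto. Qed.

Lemma sumR_add f g m : sumR (fun i => f i + g i) m = sumR f m + sumR g m.
Proof. induction m; [unfold sumR; simpl; ring|]. rewrite !sumR_S, IHm; ring. Qed.

Lemma sumR_scal c f m : sumR (fun i => c * f i) m = c * sumR f m.
Proof. induction m; [unfold sumR; simpl; ring|]. rewrite !sumR_S, IHm; ring. Qed.

Lemma sumR_swap (g : nat -> nat -> R) m n :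
  sumR (fun i => sumR (fun t => g i t) n) m = sumR (fun t => sumR (fun i => g i t) m) n.
Proof. induction m.
  - unfold sumR at 1; simpl. symmetry. induction n; [reflexivity|]. rewrite sumR_S, IHn. unfold sumR; simpl; ring.
  - rewrite sumR_S, IHm, <- sumR_add. apply sumR_ext; intros. rewrite sumR_S; reflexivity. Qed.

Lemma sumR_zero f m : (forall i, (i < m)%nat -> f i = 0) -> sumR f m = 0.
Proof. induction m; intros H; [reflexivity|]. rewrite sumR_S, IHm, H; auto; ring. Qed.

Lemma sumR_single f m s : (s < m)%nat -> (forall t, (t < m)%nat -> t <> s -> f t = 0) -> sumR f m = f s.
Proof. induction m; intros Hs H; [lia|]. rewrite sumR_S.
  destruct (Nat.eq_dec s m) as [->|Hne].
  - rewrite sumR_zero; [ring|]. intros; apply H; lia.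
  - rewrite IHm by (auto; lia). rewrite (H m); [ring|lia|lia]. Qed.

Lemma sumR_nonneg f m : (forall i, (i < m)%nat -> 0 <= f i) -> 0 <= sumR f m.
Proof. induction m; intros H; [unfold sumR; simpl; lra|]. rewrite sumR_S.
  assert (0 <= sumR f m) by auto. assert (0 <= f m) by auto. lra. Qed.

Lemma sumR_pos f m i : (forall i, (i < m)%nat -> 0 <= f i) -> (i < m)%nat -> 0 < f i -> 0 < sumR f m.
Proof. induction m; intros H Hi Hp; [lia|]. rewrite sumR_S.
  assert (0 <= sumR f m) by (apply sumR_nonneg; auto).
  destruct (Nat.eq_dec i m) as [->|]. lra.
  assert (0 < sumR f m) by (apply IHm; auto; lia). assert (0 <= f m) by auto. lra. Qed.

Lemma countN_S P m : countN P (S m) = (countN P m + if P m then 1 else 0)%nat.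
Proof. unfold countN. rewrite seq_S, filter_app, length_app. simpl. destruct (P m); simpl; try rewrite Nat.add_0_r; reflexivity. Qed.

Lemma countN_ext P Q m : (forall i, (i < m)%nat -> P i = Q i) -> countN P m = countN Q m.
Proof. induction m; intros H; [reflexivity|]. rewrite !countN_S, IHm, H; auto. Qed.

Lemma countN_le P Q m : (forall i, (i < m)%nat -> P i = true -> Q i = true) -> (countN P m <= countN Q m)%nat.
Proof. induction m; intros H; [unfold countN; simpl; lia|]. rewrite !countN_S.
  assert (countN P m <= countN Q m)%nat by auto.
  specialize (H m). destruct (P m), (Q m); try lia. all: specialize (H ltac:(lia) eq_refl); discriminate. Qed.

Lemma countN_lt P Q m i : (forall i, (i < m)%nat -> P i = true -> Q i = true) -> (i < m)%nat ->
  P i = false -> Q i = true -> (countN P m < countN Q m)%nat.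
Proof. induction m; intros H Hi HP HQ; [lia|]. rewrite !countN_S.
  destruct (Nat.eq_dec i m) as [->|].
  - assert (countN P m <= countN Q m)%nat by (apply countN_le; auto). rewrite HP, HQ; lia.
  - assert (countN P m < countN Q m)%nat by (apply IHm; auto; lia).
    specialize (H m). destruct (P m), (Q m); try lia. all: specialize (H ltac:(lia) eq_refl); discriminate. Qed.

Lemma countN_or R P Q m : (forall i, (i < m)%nat -> R i = orb (P i) (Q i) /\ andb (P i) (Q i) = false) ->
  countN R m = (countN P m + countN Q m)%nat.
Proof. induction m; intros H; [reflexivity|]. rewrite !countN_S, IHm by auto.
  destruct (H m ltac:(lia)) as [H1 H2]. rewrite H1. destruct (P m), (Q m); simpl in *; lia. Qed.

Lemma countN_false P m : (forall i, (i < m)%nat -> P i = false) -> countN P m = 0%nat.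
Proof. induction m; intros H; [reflexivity|]. rewrite countN_S, IHm, H; auto. Qed.

Lemma INR_countN P c m : INR (countN P m) * c = sumR (fun i => if P i then c else 0) m.
Proof. induction m; [unfold sumR; simpl; ring|]. rewrite countN_S, sumR_S, plus_INR, <- IHm.
  destruct (P m); simpl; ring. Qed.

Lemma pinv_pos t : 0 < / 2 ^ t.
Proof. apply Rinv_0_lt_compat, pow_lt; lra. Qed.

Lemma pinv_lt s t : (s < t)%nat -> / 2 ^ t < / 2 ^ s.
Proof. intros H. apply Rinv_lt_contravar. apply Rmult_lt_0_compat; apply pow_lt; lra.
  apply Rlt_pow; lra || lia. Qed.

Lemma pinv_le s t : (s <= t)%nat -> / 2 ^ t <= / 2 ^ s.
Proof. intros H. destruct (Nat.eq_dec s t) as [->|]. lra. left; apply pinv_lt; lia. Qed.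

Lemma pinv_lt_inv s t : / 2 ^ t < / 2 ^ s -> (s < t)%nat.
Proof. intros H. destruct (Nat.lt_ge_cases s t); auto. pose proof (pinv_le t s H0). lra. Qed.

Lemma pinv_inj s t : / 2 ^ t = / 2 ^ s -> s = t.
Proof. intros H. destruct (Nat.lt_total s t) as [h|[h|h]]; auto.
  pose proof (pinv_lt _ _ h); lra. pose proof (pinv_lt _ _ h); lra. Qed.

Definition H (n : nat) (mu a : R) : R :=
  if Rlt_dec a (/ 2 ^ (n - 2) / 3 * mu) then 0
  else if Rlt_dec a (/ 2 ^ (n - 2) * mu) then / 2 ^ (n - 1)
  else if Rle_dec mu a then 1
  else match first_band mu a (seq 1 (n - 2)) with
       | Some t => / 2 ^ t
       | None => 0
       end.

Definition sgn_ok := sgn.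

Lemma Qtil_H n mu w : Qtil n mu w = sgn w * H n mu (Rabs w).
Proof. unfold Qtil, H.
  repeat match goal with |- context[if ?c then _ else _] => destruct c end; try ring.
  destruct (first_band _ _ _); ring. Qed.

Lemma fb_some mu a l t : first_band mu a l = Some t -> In t l /\ / 2 ^ t * mu <= a < / 2 ^ (t - 1) * mu.
Proof. induction l; simpl; [discriminate|].
  destruct (Rle_dec _ _); [destruct (Rlt_dec _ _)|].
  - intros E; injection E; intros ->; auto.
  - intros E; destruct (IHl E); auto.
  - intros E; destruct (IHl E); auto. Qed.

Lemma fb_none mu a l t : In t l -> / 2 ^ t * mu <= a < / 2 ^ (t - 1) * mu -> first_band mu a l <> None.
Proof. induction l; simpl; [tauto|]. intros [<-|Hin] [H1 H2].
  - destruct (Rle_dec _ _); [destruct (Rlt_dec _ _)|]; try discriminate; lra.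
  - destruct (Rle_dec _ _); [destruct (Rlt_dec _ _)|]; try discriminate; apply IHl; auto. Qed.

Lemma band_exists mu a m : 0 < mu -> (1 <= m)%nat -> / 2 ^ m * mu <= a -> a < mu ->
  exists t, (1 <= t <= m)%nat /\ / 2 ^ t * mu <= a < / 2 ^ (t - 1) * mu.
Proof. intros hmu. induction m; intros Hm H1 H2; [lia|].
  destruct (Nat.eq_dec m 0) as [->|].
  - exists 1%nat. simpl. split; [lia|]. lra.
  - destruct (Rle_dec (/ 2 ^ m * mu) a).
    + destruct IHm as [t [Ht Hb]]; auto; try lia. exists t; split; auto; lia.
    + exists (S m); split; [lia|]. simpl (S m - 1)%nat. rewrite Nat.sub_0_r. lra. Qed.

Lemma H_spec n mu a : 0 < mu -> (2 <= n)%nat ->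
  (a < / 2 ^ (n - 2) / 3 * mu /\ H n mu a = 0) \/
  (/ 2 ^ (n - 2) / 3 * mu <= a < / 2 ^ (n - 2) * mu /\ H n mu a = / 2 ^ (n - 1)) \/
  (exists t, (1 <= t <= n - 2)%nat /\ / 2 ^ t * mu <= a < / 2 ^ (t - 1) * mu /\
     / 2 ^ (n - 2) * mu <= a < mu /\ H n mu a = / 2 ^ t) \/
  (mu <= a /\ H n mu a = 1).
Proof. intros hmu hn. unfold H.
  destruct (Rlt_dec _ _). left; auto.
  destruct (Rlt_dec _ _). right; left; split; auto; lra.
  destruct (Rle_dec _ _). right; right; right; auto.
  right; right; left.
  assert (n - 2 <> 0)%nat as Hn2.
  { intros E. rewrite E in n1. simpl in n1. lra. }
  destruct (band_exists mu a (n - 2)) as [t0 [Ht0 Hb0]]; auto; try lia; try lra.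
  destruct (first_band mu a (seq 1 (n - 2))) as [tt|] eqn:E.
  - destruct (fb_some _ _ _ _ E) as [Hin Hb]. apply in_seq in Hin.
    exists tt. split; [lia|]. split; auto. split; [split; lra|reflexivity].
  - exfalso. apply (fb_none mu a (seq 1 (n - 2)) t0); auto. apply in_seq; lia. Qed.

Definition inS (n : nat) (q : R) := q = 0 \/ exists s, (s < n)%nat /\ q = / 2 ^ s.

Lemma H_inS n mu a : 0 < mu -> (2 <= n)%nat -> inS n (H n mu a).
Proof. intros hmu hn. unfold inS.
  destruct (H_spec n mu a hmu hn) as [[_ E]|[[_ E]|[[t [Ht [_ [_ E]]]]|[_ E]]]]; rewrite E.
  - left; auto.
  - right; exists (n-1)%nat; split; [lia|reflexivity].
  - right; exists t; split; [lia|reflexivity].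
  - right; exists 0%nat; split; [lia|simpl; field]. Qed.

Lemma H_mono n mu a1 a2 : 0 < mu -> (2 <= n)%nat -> a1 <= a2 -> H n mu a1 <= H n mu a2.
Proof. intros hmu hn Ha.
  assert (T : 0 < / 2 ^ (n - 2) * mu) by (apply Rmult_lt_0_compat; auto; apply pinv_pos).
  assert (L1 : / 2 ^ (n - 1) <= 1) by (pose proof (pinv_le 0 (n-1) ltac:(lia)); simpl in *; lra).
  assert (P1 : 0 < / 2 ^ (n - 1)) by apply pinv_pos.
  assert (P0 : / 2 ^ (n - 2) <= 1) by (pose proof (pinv_le 0 (n-2) ltac:(lia)); simpl in *; lra).
  assert (T2 : / 2 ^ (n - 2) * mu <= mu) by (pose proof (Rmult_le_compat_r mu _ _ (Rlt_le _ _ hmu) P0); lra).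
  assert (T1 : / 2 ^ (n - 2) / 3 * mu <= / 2 ^ (n - 2) * mu) by (unfold Rdiv; lra).
  destruct (H_spec n mu a1 hmu hn) as [[A1 E1]|[[A1 E1]|[[t1 [Ht1 [B1 [A1 E1]]]]|[A1 E1]]]];
  destruct (H_spec n mu a2 hmu hn) as [[A2 E2]|[[A2 E2]|[[t2 [Ht2 [B2 [A2 E2]]]]|[A2 E2]]]];
  rewrite E1, E2; try lra; try apply pinv_pos; try (left; apply pinv_pos).
  - apply pinv_le; lia.
  - destruct (Nat.le_gt_cases t2 t1). apply pinv_le; lia.
    assert (/ 2 ^ (t2 - 1) <= / 2 ^ t1) by (apply pinv_le; lia).
    assert (/ 2 ^ (t2 - 1) * mu <= / 2 ^ t1 * mu) by (apply Rmult_le_compat_r; lra). lra.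
  - pose proof (pinv_le 0 t1 ltac:(lia)); simpl in *; lra.
Qed.

Lemma H_0 n mu : 0 < mu -> H n mu 0 = 0.
Proof. intros hmu. unfold H. destruct (Rlt_dec _ _); auto. exfalso. apply n0.
  assert (0 < / 2 ^ (n - 2)) by apply pinv_pos. apply Rmult_lt_0_compat; lra. Qed.

Lemma sgn_mul w : sgn w * w = Rabs w.
Proof. unfold sgn. destruct (Rlt_dec 0 w). rewrite Rabs_right; lra.
  destruct (Rlt_dec w 0). rewrite Rabs_left; lra. assert (w = 0) by lra. subst. rewrite Rabs_R0; ring. Qed.

Lemma sgn_abs w : w <> 0 -> Rabs (sgn w) = 1.
Proof. intros. unfold sgn. destruct (Rlt_dec 0 w). rewrite Rabs_R1; auto.
  destruct (Rlt_dec w 0). rewrite Rabs_left; lra. lra. Qed.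

Lemma H_ge0 n mu a : 0 < mu -> (2 <= n)%nat -> 0 <= H n mu a.
Proof. intros. destruct (H_inS n mu a) as [E|[s [_ E]]]; auto; rewrite E; [lra|left; apply pinv_pos]. Qed.

Lemma Q_abs n mu w : 0 < mu -> (2 <= n)%nat -> Rabs (Qtil n mu w) = H n mu (Rabs w).
Proof. intros. rewrite Qtil_H. destruct (Req_dec w 0) as [->|Hw].
  rewrite Rabs_R0, H_0; auto; rewrite Rmult_0_r, Rabs_R0; auto.
  rewrite Rabs_mult, sgn_abs, Rabs_right; auto; [ring|]. apply Rle_ge, H_ge0; auto. Qed.

Lemma Q_mulw n mu w : Qtil n mu w * w = H n mu (Rabs w) * Rabs w.
Proof. rewrite Qtil_H, <- sgn_mul. ring. Qed.

Lemma Q_sq n mu w : 0 < mu -> (2 <= n)%nat -> Qtil n mu w ^ 2 = H n mu (Rabs w) ^ 2.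
Proof. intros. rewrite <- Q_abs by auto. rewrite <- pow2_abs. reflexivity. Qed.

Definition reqb (x y : R) : bool := if Req_EM_T x y then true else false.
Definition rltb (x y : R) : bool := if Rlt_dec x y then true else false.

Lemma reqb_spec x y : reqb x y = true <-> x = y.
Proof. unfold reqb; destruct (Req_EM_T x y); split; congruence. Qed.
Lemma rltb_spec x y : rltb x y = true <-> x < y.
Proof. unfold rltb; destruct (Rlt_dec x y); split; intros; auto; try discriminate; contradiction. Qed.

Lemma inS_le1 n q : inS n q -> q <= 1.
Proof. intros [->|[s [_ ->]]]. lra. pose proof (pinv_le 0 s ltac:(lia)). simpl in *; lra. Qed.

Lemma inS_split n q t : inS n q -> (/ 2 ^ S t < q <-> / 2 ^ t < q \/ q = / 2 ^ t).
Proof. intros HS. split.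
  - destruct HS as [->|[s [_ ->]]]. pose proof (pinv_pos (S t)); lra.
    intros Hl. apply pinv_lt_inv in Hl. destruct (Nat.eq_dec s t) as [->|]. right; auto.
    left. apply pinv_lt; lia.
  - pose proof (pinv_lt t (S t) ltac:(lia)). intros [|]; lra. Qed.

Lemma inS_below n q t : inS n q -> q < / 2 ^ t -> q <= / 2 ^ S t.
Proof. intros [->|[s [_ ->]]] Hl. left; apply pinv_pos. apply pinv_lt_inv in Hl. apply pinv_le; lia. Qed.

Lemma prefix_count N n (h : nat -> R) (k : nat -> nat)
  (hS : forall i, (i < N)%nat -> inS n (h i))
  (hk : forall t, k t = countN (fun i => reqb (h i) (/ 2 ^ t)) N) :
  forall t, prefix k t = countN (fun j => rltb (/ 2 ^ t) (h j)) N.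
Proof. induction t.
  - simpl. symmetry. apply countN_false. intros i Hi. pose proof (inS_le1 _ _ (hS i Hi)).
    destruct (rltb (/ 1) (h i)) eqn:E; auto. apply rltb_spec in E. rewrite Rinv_1 in E. lra.
  - simpl. rewrite IHt, hk. symmetry. apply countN_or. intros i Hi.
    pose proof (inS_split _ _ t (hS i Hi)) as Hsp.
    destruct (rltb (/ 2 ^ S t) (h i)) eqn:E1; destruct (rltb (/ 2 ^ t) (h i)) eqn:E2;
    destruct (reqb (h i) (/ 2 ^ t)) eqn:E3; cbn [andb orb]; split; auto;
    repeat match goal with
    | H : rltb _ _ = true |- _ => apply rltb_spec in H
    | H : reqb _ _ = true |- _ => apply reqb_spec in H
    | H : rltb _ _ = false |- _ => rewrite <- not_true_iff_false, rltb_spec in H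
    | H : reqb _ _ = false |- _ => rewrite <- not_true_iff_false, reqb_spec in H
    end; try tauto; try lra. Qed.

Lemma block_mem N n (W : nat -> R) (h : nat -> R) (k : nat -> nat)
  (hS : forall i, (i < N)%nat -> inS n (h i))
  (hmono : forall i j, (i < N)%nat -> (j < N)%nat -> Rabs (W i) <= Rabs (W j) -> h i <= h j)
  (hk : forall t, k t = countN (fun i => reqb (h i) (/ 2 ^ t)) N) :
  forall t i, (i < N)%nat ->
  andb (Nat.leb (prefix k t) (rank N W i)) (Nat.ltb (rank N W i) (prefix k (S t))) = reqb (h i) (/ 2 ^ t).
Proof. intros t i Hi.
  assert (Hr : rank N W i = countN (fun j => rltb (Rabs (W i)) (Rabs (W j))) N) by reflexivity.
  rewrite Hr, !(prefix_count N n h k hS hk).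
  assert (C1 : forall j, (j < N)%nat -> h i < h j -> Rabs (W i) < Rabs (W j)).
  { intros j Hj Hl. destruct (Rlt_dec (Rabs (W i)) (Rabs (W j))); auto.
    assert (h j <= h i) by (apply hmono; auto; lra). lra. }
  assert (C2 : forall j, (j < N)%nat -> Rabs (W i) < Rabs (W j) -> h i <= h j).
  { intros j Hj Hl. apply hmono; auto; lra. }
  pose proof (pinv_lt t (S t) ltac:(lia)) as Hts.
  destruct (reqb (h i) (/ 2 ^ t)) eqn:E.
  - apply reqb_spec in E. apply andb_true_intro; split.
    + apply Nat.leb_le, countN_le. intros j Hj Hq. apply rltb_spec in Hq. apply rltb_spec. apply C1; auto; lra.
    + apply Nat.ltb_lt. apply countN_lt with i; auto.
      * intros j Hj Hq. apply rltb_spec in Hq. apply rltb_spec. specialize (C2 j Hj Hq). lra.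
      * destruct (rltb (Rabs (W i)) (Rabs (W i))) eqn:E'; auto. apply rltb_spec in E'; lra.
      * apply rltb_spec; lra.
  - rewrite <- not_true_iff_false, reqb_spec in E.
    destruct (Rlt_dec (/ 2 ^ t) (h i)) as [Hg|Hl].
    + apply andb_false_intro1. apply Nat.leb_gt. apply countN_lt with i; auto.
      * intros j Hj Hq. apply rltb_spec in Hq. apply rltb_spec. specialize (C2 j Hj Hq). lra.
      * destruct (rltb (Rabs (W i)) (Rabs (W i))) eqn:E'; auto. apply rltb_spec in E'; lra.
      * apply rltb_spec; lra.
    + assert (h i <= / 2 ^ S t) by (apply inS_below with n; auto; lra).
      apply andb_false_intro2. apply Nat.ltb_ge. apply countN_le.
      intros j Hj Hq. apply rltb_spec in Hq. apply rltb_spec. apply C1; auto; lra.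
Qed.

Lemma sel_sum n q (g : nat -> R) c : inS n q -> (q = 0 -> c = 0) ->
  (forall s, (s < n)%nat -> q = / 2 ^ s -> g s = c) ->
  sumR (fun t => if reqb q (/ 2 ^ t) then g t else 0) n = c.
Proof. intros [E|[s [Hs E]]] H0 Hg.
  - rewrite H0 by auto. apply sumR_zero. intros t Ht. destruct (reqb q (/ 2 ^ t)) eqn:R; auto.
    apply reqb_spec in R. pose proof (pinv_pos t). lra.
  - rewrite (sumR_single _ n s); auto.
    + destruct (reqb q (/ 2 ^ s)) eqn:R; [apply Hg; auto|]. rewrite <- not_true_iff_false, reqb_spec in R. tauto.
    + intros t Ht Hne. destruct (reqb q (/ 2 ^ t)) eqn:R; auto. apply reqb_spec in R.
      rewrite E in R. apply pinv_inj in R. lia. Qed.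

Lemma A_ident N n (h : nat -> R) (k : nat -> nat)
  (hS : forall i, (i < N)%nat -> inS n (h i))
  (hk : forall t, k t = countN (fun i => reqb (h i) (/ 2 ^ t)) N) :
  sumR (fun t => INR (k t) * / 2 ^ (2 * t)) n = sumR (fun i => h i ^ 2) N.
Proof.
  transitivity (sumR (fun t => sumR (fun i => if reqb (h i) (/ 2 ^ t) then / 2 ^ (2 * t) else 0) N) n).
  { apply sumR_ext; intros t Ht. rewrite hk. apply INR_countN. }
  rewrite <- sumR_swap. apply sumR_ext; intros i Hi. apply sel_sum; auto.
  - intros ->; ring.
  - intros s Hs ->. rewrite Nat.mul_comm, pow_mult, <- pow_inv. reflexivity. Qed.

Lemma B_ident N n (W : nat -> R) (h : nat -> R) (k : nat -> nat)
  (hS : forall i, (i < N)%nat -> inS n (h i))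
  (hmono : forall i j, (i < N)%nat -> (j < N)%nat -> Rabs (W i) <= Rabs (W j) -> h i <= h j)
  (hk : forall t, k t = countN (fun i => reqb (h i) (/ 2 ^ t)) N) :
  sumR (fun t => / 2 ^ t * block_l1 N W k t) n = sumR (fun i => h i * Rabs (W i)) N.
Proof.
  transitivity (sumR (fun t => sumR (fun i => if reqb (h i) (/ 2 ^ t) then / 2 ^ t * Rabs (W i) else 0) N) n).
  { apply sumR_ext; intros t Ht. unfold block_l1. rewrite <- sumR_scal. apply sumR_ext; intros i Hi.
    rewrite (block_mem N n W h k hS hmono hk t i Hi). destruct (reqb _ _); ring. }
  rewrite <- sumR_swap. apply sumR_ext; intros i Hi. apply sel_sum; auto.
  - intros ->; ring.
  - intros s Hs ->. reflexivity. Qed.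

Lemma err_expand N n mu W s : 0 < mu -> (2 <= n)%nat ->
  err N n mu W s = powerRZ 2 s ^ 2 * sumR (fun i => H n mu (Rabs (W i)) ^ 2) N
    - 2 * powerRZ 2 s * sumR (fun i => H n mu (Rabs (W i)) * Rabs (W i)) N
    + sumR (fun i => W i ^ 2) N.
Proof. intros hmu hn. unfold err. induction N.
  - unfold sumR; simpl; ring.
  - rewrite !sumR_S, IHN. rewrite <- Q_sq, <- Q_mulw by auto. ring. Qed.

Lemma pow2_exp z : powerRZ 2 z = exp (IZR z * ln 2).
Proof. rewrite powerRZ_Rpower by lra. reflexivity. Qed.

Lemma exp_le a b : a <= b -> exp a <= exp b.
Proof. intros [Hab|Hab]; [left; apply exp_increasing; auto|rewrite Hab; lra]. Qed.

Lemma exp2 a : 2 * exp a = exp (a + ln 2).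
Proof. rewrite exp_plus, exp_ln by lra. ring. Qed.

Lemma discrete_min A B z s : 0 < A -> 0 < B ->
  Int_part (log2R (4 * B / (3 * A))) = z ->
  powerRZ 2 z ^ 2 * A - 2 * powerRZ 2 z * B <= powerRZ 2 s ^ 2 * A - 2 * powerRZ 2 s * B.
Proof. intros hA hB Hz.
  set (r := 4 * B / (3 * A)).
  assert (hr : 0 < r) by (unfold r; apply Rdiv_lt_0_compat; lra).
  assert (Br : B = 3 * A * r / 4) by (unfold r; field; lra).
  pose proof (base_Int_part (log2R r)) as [I1 I2]. fold r in Hz. rewrite Hz in I1, I2.
  assert (l2 : 0 < ln 2) by (pose proof ln_lt_2; lra).
  assert (Lr : log2R r * ln 2 = ln r) by (unfold log2R; field; lra).
  rewrite !pow2_exp.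
  set (xs := exp (IZR z * ln 2)). set (x := exp (IZR s * ln 2)).
  assert (X1 : xs <= r).
  { unfold xs. rewrite <- (exp_ln r hr), <- Lr. apply exp_le. apply Rmult_le_compat_r; lra. }
  assert (X2 : r < 2 * xs).
  { unfold xs. rewrite <- (exp_ln r hr), <- Lr. rewrite exp2.
    apply exp_increasing. nra. }
  assert (xsp : 0 < xs) by apply exp_pos.
  assert (xp : 0 < x) by apply exp_pos.
  assert (D : x ^ 2 * A - 2 * x * B - (xs ^ 2 * A - 2 * xs * B) = (x - xs) * (A * (x + xs) - 2 * B)) by ring.
  destruct (Z.lt_total s z) as [Hlt|[->|Hgt]].
  - assert (2 * x <= xs).
    { unfold x, xs. rewrite exp2. apply exp_le.
      apply Zlt_le_succ in Hlt. apply IZR_le in Hlt. rewrite succ_IZR in Hlt. nra. }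
    assert (A * x * 2 <= A * xs) by nra. assert (A * r >= A * xs) by nra.
    assert (0 <= (x - xs) * (A * (x + xs) - 2 * B)) by (replace ((x - xs) * (A * (x + xs) - 2 * B)) with ((xs - x) * (2 * B - A * (x + xs))) by ring; apply Rmult_le_pos; nra || lra).
    nra.
  - unfold x, xs; lra.
  - assert (2 * xs <= x).
    { unfold x, xs. rewrite exp2. apply exp_le.
      apply Zlt_le_succ in Hgt. apply IZR_le in Hgt. rewrite succ_IZR in Hgt. nra. }
    assert (A * xs * 2 <= A * x) by nra. assert (A * r < A * xs * 2) by nra.
    assert (0 <= (x - xs) * (A * (x + xs) - 2 * B)) by (apply Rmult_le_pos; nra || lra).
    nra. Qed.

Lemma main_n (n N : nat) (W : nat -> R) (mu : R) (hn : (2 <= n)%nat) (hmu : 0 < mu)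
  (hQ : exists i, (i < N)%nat /\ Qtil n mu (W i) <> 0) :
  forall s : Z, err N n mu W (sstar N n mu W) <= err N n mu W s.
Proof. intros s.
  set (h := fun i => H n mu (Rabs (W i))).
  assert (hS : forall i, (i < N)%nat -> inS n (h i)) by (intros; apply H_inS; auto).
  assert (hmono : forall i j, (i < N)%nat -> (j < N)%nat -> Rabs (W i) <= Rabs (W j) -> h i <= h j)
    by (intros; apply H_mono; auto).
  assert (hk : forall t, ktil N n mu W t = countN (fun i => reqb (h i) (/ 2 ^ t)) N).
  { intros t. unfold ktil. apply countN_ext. intros i Hi. unfold reqb, h. rewrite Q_abs by auto. reflexivity. }
  destruct hQ as [i0 [Hi0 HQ0]].
  assert (hp : 0 < h i0).
  { unfold h. rewrite <- Q_abs by auto. apply Rabs_pos_lt; auto. }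
  assert (hw : 0 < Rabs (W i0)).
  { destruct (Req_dec (W i0) 0) as [E|E]. unfold h in hp. rewrite E, Rabs_R0, H_0 in hp; lra. apply Rabs_pos_lt; auto. }
  assert (h0 : forall i, 0 <= h i) by (intros; unfold h; apply H_ge0; auto).
  assert (hA : 0 < sumR (fun i => h i ^ 2) N).
  { apply sumR_pos with i0; auto. intros; apply pow2_ge_0. nra. }
  assert (hB : 0 < sumR (fun i => h i * Rabs (W i)) N).
  { apply sumR_pos with i0; auto. intros. pose proof (h0 i); pose proof (Rabs_pos (W i)); nra. nra. }
  rewrite !err_expand by auto.
  apply Rplus_le_compat_r.
  apply discrete_min; auto.
  unfold sstar; cbv zeta.
  rewrite (B_ident N n W h (ktil N n mu W) hS hmono hk).
  rewrite (A_ident N n h (ktil N n mu W) hS hk).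
  reflexivity. Qed.

Theorem theorem2 (b N : nat) (W : nat -> R) (mu : R)
  (hb : (3 <= b)%nat)
  (hdist : forall i j, (i < N)%nat -> (j < N)%nat -> i <> j -> Rabs (W i) <> Rabs (W j))
  (hmu : 0 < mu)
  (hQ : exists i, (i < N)%nat /\ Qtil (2 ^ (b - 2)) mu (W i) <> 0) :
  forall s : Z,
    err N (2 ^ (b - 2)) mu W (sstar N (2 ^ (b - 2)) mu W) <= err N (2 ^ (b - 2)) mu W s.
Proof.
  apply main_n; auto.
  assert (2 ^ 1 <= 2 ^ (b - 2))%nat by (apply Nat.pow_le_mono_r; lia).
  simpl in *. lia.
Qed.
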